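(* Let $A$ be a 2-sided residuated $\vee$-semilattice and let $F$ be a filter of $A$. Then $F$ equals the intersection of all $\vee$-prime filters of $A$ that contain $F$.
   Context: A residuated poset is a partially ordered semigroup $(A;\cdot,\le)$ with binary operations $\to,\leadsto$ such that $x\cdot y\le z$ iff $x\le y\to z$ iff $y\le x\leadsto z$. It is 2-sided if $x\cdot y\le x$ and $x\cdot y\le y$ for all $x,y$, and a residuated $\vee$-semilattice if $(A,\le)$ is a join-semilattice. A filter is a nonempty upward closed subset closed under $\cdot$. A filter $G$ is $\vee$-prime if $x\vee y\in G$ implies $x\in G$ or $y\in G$. The intersection of the empty family is $A$. *)

(* Defs.v *)
Record residuated_poset := {
  carrier :> Type;
  le : carrier -> carrier -> Prop;
  mul : carrier -> carrier -> carrier;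
  rarr : carrier -> carrier -> carrier;
  larr : carrier -> carrier -> carrier;
  le_refl : forall x, le x x;
  le_antisym : forall x y, le x y -> le y x -> x = y;
  le_trans : forall x y z, le x y -> le y z -> le x z;
  mul_assoc : forall x y z, mul x (mul y z) = mul (mul x y) z;
  mul_mono : forall x y x' y', le x x' -> le y y' -> le (mul x y) (mul x' y');
  residuation1 : forall x y z, le (mul x y) z <-> le x (rarr y z);
  residuation2 : forall x y z, le (mul x y) z <-> le y (larr x z)
}.

Definition two_sided (A : residuated_poset) : Prop :=
  forall x y : A, le A (mul A x y) x /\ le A (mul A x y) y.

Definition is_join (A : residuated_poset) (j : A -> A -> A) : Prop :=
  forall x y : A, le A x (j x y) /\ le A y (j x y) /\
    (forall z, le A x z -> le A y z -> le A (j x y) z).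

Definition join_semilattice (A : residuated_poset) : Prop :=
  exists j : A -> A -> A, is_join A j.

Definition filter (A : residuated_poset) (F : A -> Prop) : Prop :=
  (exists x, F x) /\
  (forall x y, F x -> le A x y -> F y) /\
  (forall x y, F x -> F y -> F (mul A x y)).

Definition join_prime_filter (A : residuated_poset) (j : A -> A -> A)
  (G : A -> Prop) : Prop :=
  filter A G /\ forall x y, G (j x y) -> G x \/ G y.

(* Main.v *)
Require Import Defs.
From mathcomp Require classical_sets.
From Stdlib Require Import Classical.

Section S.
Variables (A : residuated_poset) (j : A -> A -> A).
Hypothesis H2 : two_sided A.
Hypothesis Hj : is_join A j.

Lemma j_l x y : le A x (j x y). Proof. apply (Hj x y). Qed.
Lemma j_r x y : le A y (j x y). Proof. apply (Hj x y). Qed.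
Lemma j_lub x y z : le A x z -> le A y z -> le A (j x y) z.
Proof. apply (Hj x y). Qed.

Lemma j_comm x y : le A (j x y) (j y x).
Proof. apply j_lub; [apply j_r | apply j_l]. Qed.

Lemma j_mono x y x' y' : le A x x' -> le A y y' -> le A (j x y) (j x' y').
Proof.
  intros; apply j_lub; [eapply le_trans; [eassumption| apply j_l] |
    eapply le_trans; [eassumption| apply j_r]].
Qed.

Lemma key u v b : le A (mul A (j u b) (j v b)) (j (mul A u v) b).
Proof.
  apply residuation2. apply j_lub; apply residuation2.
  - apply residuation1. apply j_lub; apply residuation1.
    + apply j_l.
    + eapply le_trans; [apply (proj1 (H2 b v)) | apply j_r].
  - eapply le_trans; [apply (proj2 (H2 (j u b) b)) | apply j_r].
Qed.

Definition upc (G : A -> Prop) := forall x y, G x -> le A x y -> G y.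
Definition mulc (G : A -> Prop) := forall x y, G x -> G y -> G (mul A x y).

Inductive gen (G : A -> Prop) (a : A) : A -> Prop :=
| gen_base g : G g -> gen G a g
| gen_a : gen G a a
| gen_mul u v : gen G a u -> gen G a v -> gen G a (mul A u v)
| gen_up u z : gen G a u -> le A u z -> gen G a z.

Lemma gen_lemma G a p : upc G -> mulc G -> G (j a p) ->
  forall z, gen G a z -> G (j z p).
Proof.
  intros Hu Hm Hap z Hz. induction Hz.
  - eapply Hu; [eassumption | apply j_l].
  - assumption.
  - eapply Hu; [apply (Hm _ _ IHHz1 IHHz2) | apply key].
  - eapply Hu; [eassumption | apply j_mono; [assumption | apply le_refl]].
Qed.

Lemma prime_of G x a b : upc G -> mulc G -> G (j a b) ->
  gen G a x -> gen G b x -> G x.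
Proof.
  intros Hu Hm Hab Ha Hb.
  assert (G (j x b)) by (eapply gen_lemma; eauto).
  assert (G (j b x)) by (eapply Hu; [eassumption | apply j_comm]).
  assert (G (j x x)) by (eapply gen_lemma; eauto).
  eapply Hu; [eassumption|]. apply j_lub; apply le_refl.
Qed.

End S.

Theorem corollary5p6 (A : residuated_poset) (j : A -> A -> A)
  (H2 : two_sided A) (Hj : is_join A j) (F : A -> Prop) (HF : filter A F) :
  forall x : A,
    F x <-> (forall G : A -> Prop,
               join_prime_filter A j G -> (forall y, F y -> G y) -> G x).
Proof.
  intros x; split.
  - intros Fx G _ HG; auto.
  - intros Hall. apply NNPP; intro nFx.
    destruct HF as [[f0 Ff0] [Fu Fm]].
    set (P := fun G : A -> Prop => upc A G /\ mulc A G /\ ~ G x /\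
               ((forall y, F y -> G y) \/ (forall y, ~ G y))).
    destruct (@classical_sets.Zorn_bigcup A P) as [M [PM Mmax]].
    + intros C CP Ctot. unfold P. simpl.
      split; [|split; [|split]].
      * intros u v [X CX Xu] uv. exists X; auto.
        destruct (CP X CX) as [Hu _]. eapply Hu; eauto.
      * intros u v [X CX Xu] [Y CY Yv].
        destruct (Ctot X Y CX CY) as [XY | YX].
        -- exists Y; auto. destruct (CP Y CY) as [_ [Hm _]]. apply Hm; auto.
        -- exists X; auto. destruct (CP X CX) as [_ [Hm _]]. apply Hm; auto.
      * intros [X CX Xx]. destruct (CP X CX) as [_ [_ [nX _]]]. auto.
      * destruct (classic (exists X, C X /\ forall y, F y -> X y)) as [[X [CX HX]]|N].
        -- left. intros y Fy. exists X; auto.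
        -- right. intros y [X CX Xy].
           destruct (CP X CX) as [_ [_ [_ [HX|HX]]]].
           ++ apply N; eauto.
           ++ eapply HX; eauto.
    + destruct PM as [Mu [Mm [nMx Mcase]]].
      assert (FM : forall y, F y -> M y).
      { destruct Mcase as [HM|HM]; auto.
        exfalso. apply (Mmax F).
        - split.
          + intros y My. exfalso; eapply HM; eauto.
          + intro FM. eapply HM; eauto.
        - split; [exact Fu|split; [exact Fm|split; auto]]. }
      apply nMx. apply Hall; auto.
      split.
      * split; [exists f0; auto | split; auto].
      * intros a b Hab.
        apply NNPP; intro Hn. apply Hn. left.
        assert (na : ~ M a) by tauto.
        assert (nb : ~ M b) by tauto.
        assert (Hg : forall c, ~ M c -> gen A M c x).
        { intros c nc. apply NNPP; intro ngx.
          apply (Mmax (gen A M c)).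
          - split.
            + intros y My. apply gen_base; auto.
            + intro S. apply nc. apply S. apply gen_a.
          - split; [|split; [|split]].
            + intros u v Hu Huv. eapply gen_up; eauto.
            + intros u v Hu Hv. apply gen_mul; auto.
            + exact ngx.
            + left. intros y Fy. apply gen_base; auto. }
        exfalso. apply nMx.
        eapply prime_of; eauto.
Qed.
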